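(* Let $n\geq 2$ and let $X=[1+ij]_{i,j=1}^n$. Then $X=ZDZ^T$, where \[ Z=\Big[L_n\Big(\tfrac{n+1}{n}\Big)L_{n-1}\Big(\tfrac{n}{n-1}\Big)\cdots L_2\Big(\tfrac{3}{2}\Big)\Big]\Big[L_n\Big(\tfrac{n-1}{n}\Big)L_{n-1}\Big(\tfrac{n-2}{n-1}\Big)\cdots L_3\Big(\tfrac{2}{3}\Big)\Big] \] and $D$ is the $n\times n$ diagonal matrix with $D_{11}=2$, $D_{22}=\tfrac12$, and $D_{kk}=0$ for $3\leq k\leq n$.
   Context: For a real number $s$ and $2\leq i\leq n$, $L_i(s)$ denotes the $n\times n$ matrix with all diagonal entries equal to $1$, $(i,i-1)$ entry equal to $s$, and all other entries zero. An empty product (when $n=2$) is the identity matrix. *)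

(* Defs.v *)
(* Matrices are 0-indexed ('I_n); the paper's 1-based
   index i corresponds to the ordinal with value i-1. *)
From HB Require Import structures.
From mathcomp Require Import all_boot all_order all_algebra.
Set Implicit Arguments. Unset Strict Implicit. Unset Printing Implicit Defensive.
Import Order.TTheory GRing.Theory Num.Theory.
Local Open Scope ring_scope.

(* L_i(s) with 1-based i (2 <= i <= n): identity plus s at 1-based entry (i, i-1),
   i.e. 0-based entry (i-1, i-2). *)
Definition Lmat (R : nzRingType) (n : nat) (i : nat) (s : R) : 'M[R]_n :=
  \matrix_(a < n, b < n)
    ((a == b)%:R + (if ((a.+1 == i) && (b.+2 == i))%N then s else 0)).

Definition mxprod (R : nzRingType) (n : nat) (s : seq 'M[R]_n) : 'M[R]_n :=
  foldr (fun A B => A *m B) 1%:M s.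

Definition Xmat (R : nzRingType) (n : nat) : 'M[R]_n :=
  \matrix_(i < n, j < n) (1 + (i.+1 * j.+1)%:R).

(* L_n((n+1)/n) L_{n-1}(n/(n-1)) ... L_2(3/2) *)
Definition Z1 (R : fieldType) (n : nat) : 'M[R]_n :=
  mxprod [seq Lmat n k (k.+1%:R / k%:R) | k <- rev (iota 2 (n - 1))].

(* L_n((n-1)/n) L_{n-1}((n-2)/(n-1)) ... L_3(2/3) *)
Definition Z2 (R : fieldType) (n : nat) : 'M[R]_n :=
  mxprod [seq Lmat n k (k.-1%:R / k%:R) | k <- rev (iota 3 (n - 2))].

Definition Zmat (R : fieldType) (n : nat) : 'M[R]_n := Z1 R n *m Z2 R n.

Definition Dmat (R : fieldType) (n : nat) : 'M[R]_n :=
  \matrix_(i < n, j < n)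
    (if i == j then (if (i == 0 :> nat) then 2 else if (i == 1 :> nat) then 2^-1 else 0)
     else 0).

(* Main.v *)
Require Import Defs.
From mathcomp Require Import all_boot all_order all_algebra.
From mathcomp Require Import ring lra zify.
Import GRing.Theory Num.Theory.
Local Open Scope ring_scope.

Section S.
Variable R : realFieldType.

Fixpoint iterL (g : nat -> R) (a : nat) (f : nat -> R) (m : nat) : nat -> R :=
  match m with
  | 0 => f
  | m'.+1 => fun j => iterL g a f m' j +
      (if (j.+1 == a + m')%N then g (a + m')%N * iterL g a f m' j.-1 else 0)
  end.

Lemma Lmat_mul n k s (v : 'cV[R]_n) (f : nat -> R) :
  (2 <= k)%N -> (forall j : 'I_n, v j 0 = f j) -> forall i : 'I_n,
  (Lmat n k s *m v) i 0 = f i + (if (i.+1 == k)%N then s * f i.-1 else 0).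
Proof.
move=> hk hv i; rewrite !mxE.
under eq_bigr => b _ do rewrite !mxE mulrDl.
rewrite big_split /=.
rewrite (bigD1 i) //= eqxx mul1r big1 ?addr0; last first.
  by move=> b /negPf hb; rewrite eq_sym hb mul0r.
rewrite hv; congr (_ + _).
case: eqP => hik; last by rewrite big1 // => b _; rewrite mul0r.
have hb : (i.-1 < n)%N by apply: leq_ltn_trans (leq_pred i) (ltn_ord i).
rewrite (bigD1 (Ordinal hb)) //= big1 ?addr0.
  rewrite -hik /=.
  have -> : (i.-1.+2 == i.+1)%N by move: hik hk; case: (nat_of_ord i) => [|x] /= <-.
  by rewrite hv.
move=> b hb'; case: ifP; last by rewrite mul0r.
move=> /eqP hb2; exfalso; move/negP: hb'; apply.
apply/eqP; apply: val_inj => /=; rewrite -hik in hb2; by case: hb2 => <-.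
Qed.

Lemma prodL n (g : nat -> R) a (f : nat -> R) (v : 'cV[R]_n) :
  (2 <= a)%N -> (forall j : 'I_n, v j 0 = f j) -> forall m (j : 'I_n),
  (mxprod [seq Lmat n k (g k) | k <- rev (iota a m)] *m v) j 0 = iterL g a f m j.
Proof.
move=> ha hv; elim=> [|m IH] j.
  by rewrite /= mul1mx hv.
rewrite (_ : iota a m.+1 = iota a m ++ [:: a + m]%N); last by rewrite -addn1 iotaD.
rewrite rev_cat /= -mulmxA.
rewrite (@Lmat_mul _ _ _ _ (iterL g a f m)) //; last by rewrite (leq_trans ha) ?leq_addr.
Qed.

Lemma cfA m j : iterL (fun k => k.-1%:R / k%:R) 3 (fun j => (j == 1)%:R) m j =
  if j == 0 then 0 else if (j <= m.+1)%N then 2 / j.+1%:R else 0.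
Proof.
elim: m j => [|m IH] j /=.
  case: j => [|[|j]] //=; by rewrite divff // pnatr_eq0.
rewrite !IH add3n eqSS.
case: (eqVneq j m.+2) => [->|hj] /=.
  rewrite ltnn !ltnSn /= add2n.
  field; repeat (apply/andP; split); apply/eqP; have := ler0n R m; lra.
rewrite addr0; case: (j =P 0) => // /eqP j0.
by rewrite [(j <= m.+2)%N]leq_eqVlt (negPf hj) /= ltnS.
Qed.

Lemma cfB m j : iterL (fun k => k.-1%:R / k%:R) 3 (fun j => (j == 0)%:R) m j = (j == 0)%:R.
Proof.
elim: m j => [|m IH] j //=.
rewrite !IH add3n eqSS.
case: (eqVneq j m.+2) => [->|hj] /=; by rewrite ?mulr0 ?addr0.
Qed.

Lemma cfC m j : iterL (fun k => k.+1%:R / k%:R) 2 (fun j => (j == 0)%:R) m j =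
  if (j <= m)%N then j.+2%:R / 2 else 0.
Proof.
elim: m j => [|m IH] j /=.
  case: j => [|j] //=; by rewrite divff // pnatr_eq0.
rewrite !IH add2n eqSS.
case: (eqVneq j m.+1) => [->|hj] /=.
  rewrite ltnn ltnSn leqnn /=.
  field; repeat (apply/andP; split); apply/eqP; have := ler0n R m; lra.
by rewrite addr0 [(j <= m.+1)%N]leq_eqVlt (negPf hj) /= ltnS.
Qed.

Lemma cfD m j : iterL (fun k => k.+1%:R / k%:R) 2 (fun j => if j == 0 then 0 else 2 / j.+1%:R) m j =
  if (j <= m)%N then j%:R else 2 / j.+1%:R.
Proof.
elim: m j => [|m IH] j /=.
  case: j => [|j] //=.
rewrite !IH add2n eqSS.
case: (eqVneq j m.+1) => [->|hj] /=.
  rewrite ltnn ltnSn leqnn /= !mulrS !mulr0n.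
  field; repeat (apply/andP; split); apply/eqP; have := ler0n R m; lra.
by rewrite addr0 [(j <= m.+1)%N]leq_eqVlt (negPf hj) /= ltnS.
Qed.

Lemma mul_col n (A B : 'M[R]_n) i c : (A *m B) i c = (A *m col c B) i 0.
Proof. by rewrite !mxE; apply: eq_bigr => k _; rewrite mxE. Qed.

Lemma Z2col n (c : 'I_n) (f : nat -> R) :
  (forall j : 'I_n, (j == c)%:R = f j) -> forall j : 'I_n,
  Z2 R n j c = iterL (fun k => k.-1%:R / k%:R) 3 f (n - 2) j.
Proof.
move=> hf j; rewrite -[Z2 R n]mulmx1 mul_col.
apply: prodL => // k; by rewrite !mxE.
Qed.

Lemma Zcol0 n (c : 'I_n) (i : 'I_n) : c = 0%N :> nat -> Zmat R n i c = i.+2%:R / 2.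
Proof.
move=> hc; rewrite /Zmat mul_col.
rewrite (@prodL _ _ _ (fun j => (j == 0)%:R)) //.
  by rewrite cfC -ltnS (leq_trans (ltn_ord i)) // -subSn ?leq_subr //; case: (n) i => [[]|].
move=> j; rewrite mxE (@Z2col _ _ (fun j => (j == 0)%:R)) ?cfB //.
by move=> k; rewrite -val_eqE /= hc.
Qed.

Lemma Zcol1 n (c : 'I_n) (i : 'I_n) : c = 1%N :> nat -> Zmat R n i c = i%:R.
Proof.
move=> hc; rewrite /Zmat mul_col.
rewrite (@prodL _ _ _ (fun j => if j == 0 then 0 else 2 / j.+1%:R)) //.
  by rewrite cfD -ltnS (leq_trans (ltn_ord i)) // -subSn ?leq_subr //; case: (n) i => [[]|].
move=> j; rewrite mxE (@Z2col _ _ (fun j => (j == 1)%:R)) ?cfA //; last by move=> k; rewrite -val_eqE /= hc.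
have h2 := ltn_ord c; rewrite hc in h2.
have -> : (j <= (n - 2).+1)%N by have := ltn_ord j; lia.
by [].
Qed.
End S.

Lemma diag_mul (R : realFieldType) n (A : 'M[R]_n) i k : (A *m Dmat R n) i k = A i k * Dmat R n k k.
Proof.
rewrite mxE (bigD1 k) //= big1 ?addr0 // => l hl.
by rewrite [Dmat R n l k]mxE (negPf hl) mulr0.
Qed.

Lemma ZDZ (R : realFieldType) n (Z : 'M[R]_n) i j :
  (Z *m Dmat R n *m Z^T) i j = \sum_k Z i k * Dmat R n k k * Z j k.
Proof. by rewrite mxE; apply: eq_bigr => k _; rewrite diag_mul [Z^T k j]mxE. Qed.

Theorem corollary2p3 (R : realFieldType) (n : nat) (hn : (2 <= n)%N) :
  Xmat R n = Zmat R n *m Dmat R n *m (Zmat R n)^T.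
Proof.
move: n hn => [|[|n']] // _.
apply/matrixP => i j; rewrite [LHS]mxE ZDZ.
rewrite 2!big_ord_recl big1 ?addr0; last first.
  by move=> k _; rewrite [Dmat _ _ _ _]mxE eqxx /= mulr0 mul0r.
rewrite !(@Zcol0 R _ ord0) // !(@Zcol1 R _ (lift ord0 ord0)) // !mxE /=.
rewrite natrM !mulrS !mulr0n; by field.
Qed.
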